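(* Let $\pi_1,\pi_2$ be probability vectors on the finite set $E$ with strictly positive entries, and take $P_{x,x'}=\pi_1(x')$, $Q_{y,y'}=\pi_2(y')$ for all $x,x',y,y'\in E$. Let $f:E\times E\to\mathbb Z$ with $\pi_1\otimes\pi_2(f)<0$ and $f(x,y)>0$ for some $(x,y)$. Then $\theta^*>0$ solves $\sum_{x,y}e^{\theta f(x,y)}\pi_1(x)\pi_2(y)=1$, $\pi^*(x,y)=e^{\theta^*f(x,y)}\pi_1(x)\pi_2(y)$, and with $\pi^*_1,\pi^*_2$ the marginals of $\pi^*$, $$J_1=2\theta^*\pi^*(f)-H(\pi^*_1\mid\pi_1),\qquad J_2=2\theta^*\pi^*(f)-H(\pi^*_2\mid\pi_2).$$ Consequently $2\min\{J_1,J_2\}>3\theta^*\pi^*(f)$ holds if and only if $$H(\pi^*\mid\pi_1\otimes\pi_2)>2\max\{H(\pi^*_1\mid\pi_1),H(\pi^*_2\mid\pi_2)\}.$$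
   Context: $H(\alpha\mid\beta)=\sum_z\alpha(z)\log(\alpha(z)/\beta(z))$ is relative entropy; $\nu(f)=\sum f\,d\nu$. For general irreducible stochastic $P,Q$ on $E$: $\Phi(\theta)_{(x,y),(x',y')}=e^{\theta f(x',y')}P_{x,x'}Q_{y,y'}$ with spectral radius $\varphi(\theta)$; $\theta^*>0$ is the unique positive solution of $\varphi(\theta)=1$; $r^*$ a positive right eigenvector of $\Phi(\theta^* )$ for eigenvalue $1$; $R^*_{(x,y),(x',y')}=\frac{r^*(x',y')}{r^*(x,y)}\Phi(\theta^* )_{(x,y),(x',y')}$; $\pi^*$ its invariant probability vector; $\hat\pi(x,y,x',y')=\pi^*(x,y)R^*_{(x,y),(x',y')}$; $f$ is also regarded as a function on $E^2\times E^2$ by $f(x,y,x',y')=f(x',y')$. For $g:E^2\times E^2\to\mathbb R$, $\varphi_1(g),\varphi_2(g)$ are the spectral radii of $\Phi_1(g)_{(x,y,z),(x',y',z')}=\exp(g(x,y,x',y')+g(x,z,x',z'))P_{x,x'}Q_{y,y'}Q_{z,z'}$ and $\Phi_2(g)_{(x,w,y),(x',w',y')}=\exp(g(x,y,x',y')+g(w,y,w',y'))P_{x,x'}P_{w,w'}Q_{y,y'}$, and $J_i=\sup_g\{2\hat\pi(g)-\log\varphi_i(g)\}$, $i=1,2$. *)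

(* Defs.v *)
From HB Require Import structures.
From mathcomp Require Import all_boot all_order all_algebra.
From mathcomp Require Import all_classical all_reals all_analysis.
From mathcomp Require Import complex.
Set Implicit Arguments. Unset Strict Implicit. Unset Printing Implicit Defensive.
Import Order.TTheory GRing.Theory Num.Theory.
Local Open Scope ring_scope.
Local Open Scope classical_set_scope.

Section Defs.
Variable R : realType.

Definition mx_of (T : finType) (F : T -> T -> R) : 'M[R]_#|T| :=
  \matrix_(i, j) F (enum_val i) (enum_val j).

Definition cmod (l : complex.complex R) : R :=
  Num.sqrt (complex.Re l ^+ 2 + complex.Im l ^+ 2).

Definition spectral_radius (n : nat) (A : 'M[R]_n) : R :=
  sup [set r : R | exists l : complex.complex R,
        root (char_poly (map_mx (fun x : R => complex.Complex x 0) A)) l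
        /\ r = cmod l].

Definition spectral_radius_of (T : finType) (F : T -> T -> R) : R :=
  spectral_radius (mx_of F).

Definition relent (T : finType) (alpha beta : T -> R) : R :=
  \sum_(z : T) alpha z * ln (alpha z / beta z).

Variable E : finType.

(* Phi(theta) for P_{x,x'} = pi1 x', Q_{y,y'} = pi2 y' *)
Definition Phi (pi1 pi2 : E -> R) (f : E * E -> int) (theta : R)
  (a b : E * E) : R :=
  expR (theta * (f b)%:~R) * pi1 b.1 * pi2 b.2.

(* R^* built from a right eigenvector r *)
Definition Rstar (pi1 pi2 : E -> R) (f : E * E -> int) (theta : R)
  (r : E * E -> R) (a b : E * E) : R :=
  r b / r a * Phi pi1 pi2 f theta a b.

Definition pihat (pi1 pi2 : E -> R) (f : E * E -> int) (theta : R)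
  (r pis : E * E -> R) (x y x' y' : E) : R :=
  pis (x, y) * Rstar pi1 pi2 f theta r (x, y) (x', y').

Definition pihat_int (pi1 pi2 : E -> R) (f : E * E -> int) (theta : R)
  (r pis : E * E -> R) (g : E -> E -> E -> E -> R) : R :=
  \sum_(x : E) \sum_(y : E) \sum_(x' : E) \sum_(y' : E)
     pihat pi1 pi2 f theta r pis x y x' y' * g x y x' y'.

Definition Phi1 (pi1 pi2 : E -> R) (g : E -> E -> E -> E -> R)
  (a b : E * E * E) : R :=
  let: (x, y, z) := a in let: (x', y', z') := b in
  expR (g x y x' y' + g x z x' z') * pi1 x' * pi2 y' * pi2 z'.

Definition Phi2 (pi1 pi2 : E -> R) (g : E -> E -> E -> E -> R)
  (a b : E * E * E) : R :=
  let: (x, w, y) := a in let: (x', w', y') := b in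
  expR (g x y x' y' + g w y w' y') * pi1 x' * pi1 w' * pi2 y'.

Definition J1 (pi1 pi2 : E -> R) (f : E * E -> int) (theta : R)
  (r pis : E * E -> R) : \bar R :=
  ereal_sup [set ((2 * pihat_int pi1 pi2 f theta r pis g
                   - ln (spectral_radius_of (Phi1 pi1 pi2 g)))%:E)%E
            | g in [set: E -> E -> E -> E -> R]].

Definition J2 (pi1 pi2 : E -> R) (f : E * E -> int) (theta : R)
  (r pis : E * E -> R) : \bar R :=
  ereal_sup [set ((2 * pihat_int pi1 pi2 f theta r pis g
                   - ln (spectral_radius_of (Phi2 pi1 pi2 g)))%:E)%E
            | g in [set: E -> E -> E -> E -> R]].

Definition marg1 (pis : E * E -> R) (x : E) : R := \sum_(y : E) pis (x, y).
Definition marg2 (pis : E * E -> R) (y : E) : R := \sum_(x : E) pis (x, y).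

Definition integ (mu : E * E -> R) (f : E * E -> int) : R :=
  \sum_(z : E * E) mu z * (f z)%:~R.

End Defs.

(* Main.v *)
Require Import Defs.
From HB Require Import structures.
From mathcomp Require Import all_boot all_order all_algebra.
From mathcomp Require Import all_classical all_reals all_analysis.
From mathcomp Require Import complex polyrcf ring lra.
Import Order.TTheory GRing.Theory Num.Theory.
Local Open Scope ring_scope.


Section Key.
Variable R : realType.

Lemma charE (n : nat) (B : 'M[R]_n) (u : R) i :
  let Yp := fun i => \sum_j (\adj (char_poly_mx B)) i j in
  u * (Yp i).[u] - \sum_j B i j * (Yp j).[u] = (char_poly B).[u].
Proof.
move=> Yp.
have E1 : \sum_j (char_poly_mx B) i j * Yp j = char_poly B.
  transitivity (\sum_k (char_poly_mx B *m \adj (char_poly_mx B)) i k).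
    rewrite /Yp. under eq_bigr do rewrite big_distrr.
    rewrite exchange_big; apply: eq_bigr => k _; by rewrite mxE.
  rewrite mul_mx_adj (bigD1 i) //= mxE eqxx big1 ?addr0 // => k ki.
  by rewrite mxE eq_sym (negbTE ki).
clearbody Yp. rewrite -E1 horner_sum.
rewrite [RHS](eq_bigr (fun j => (u *+ (i == j)) * (Yp j).[u] - B i j * (Yp j).[u])); last first.
  by move=> j _; rewrite hornerM !mxE hornerD hornerN hornerMn hornerX hornerC mulrBl.
rewrite sumrB; congr (_ - _); symmetry.
rewrite (bigD1 i) //= eqxx mulr1n big1 ?addr0 // => j ji.
by rewrite eq_sym (negbTE ji) mulr0n mul0r.
Qed.


Lemma key (n : nat) (B : 'M[R]_n) (s : R) :
  (forall i j, 0 <= B i j) -> 0 < s ->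
  (forall u, s <= u -> ~~ root (char_poly B) u) ->
  exists y : 'I_n -> R, (forall i, 0 < y i) /\
     (forall i, \sum_j B i j * y j < s * y i).
Proof.
move=> B0 s0 noroot.
pose Yp := fun i => \sum_j (\adj (char_poly_mx B)) i j.
have hE : forall u i, u * (Yp i).[u] - \sum_j B i j * (Yp j).[u] = (char_poly B).[u].
  by move=> u i; apply: charE.
set p := char_poly B in hE noroot.
have lc : 0 < lead_coef p by rewrite (monicP (char_poly_monic B)).
have [L0 hL0] := poly_pinfty_gt_lc lc.
have ppos : forall u, s <= u -> 0 < p.[u].
  move=> u su.
  have uL : u <= Num.max u L0 by rewrite le_max lexx.
  have pL : 0 < p.[Num.max u L0].
    by apply: lt_le_trans (hL0 _ _); rewrite ?lc // le_max lexx orbT.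
  case: (ltrgtP p.[u] 0) => // pu.
  - have [x /andP [ux xL] rx] : {x : R | x \in `]u, Num.max u L0[ & root p x}.
      by apply: poly_ivtoo => //; rewrite pmulr_llt0.
    by move: (noroot x (le_trans su (ltW ux))); rewrite rx.
  - by move: (noroot u su); rewrite /root pu eqxx.
have posb : forall u, 0 < u -> 0 < p.[u] -> (forall i, 0 <= (Yp i).[u]) ->
    forall i, 0 < (Yp i).[u].
  move=> u u0 pu Y0 i.
  have : 0 < u * (Yp i).[u].
    have -> : u * (Yp i).[u] = \sum_j B i j * (Yp j).[u] + p.[u].
      by rewrite -(hE u i) addrC subrK.
    apply: ltr_wpDl pu; apply: sumr_ge0 => j _; apply: mulr_ge0 => //; exact: Y0.
  by rewrite pmulr_rgt0.
have posa : forall u, 0 < u -> 0 < p.[u] -> (forall i, \sum_j B i j < u) ->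
    forall i, 0 < (Yp i).[u].
  move=> u u0 pu rs i.
  case: (@arg_minP _ _ _ i xpredT (fun k => (Yp k).[u])) => // m _ hm.
  suff : 0 < (Yp m).[u] by move=> h; apply: lt_le_trans h (hm i _).
  have h1 : (\sum_j B m j) * (Yp m).[u] <= \sum_j B m j * (Yp j).[u].
    rewrite mulr_suml; apply: ler_sum => j _; apply: ler_wpM2l => //; exact: hm.
  have h2 : (u - \sum_j B m j) * (Yp m).[u] >= p.[u].
    by rewrite -(hE u m) mulrBl lerB.
  have h3 : 0 < u - \sum_j B m j by rewrite subr_gt0.
  have : 0 < (u - \sum_j B m j) * (Yp m).[u] by apply: lt_le_trans h2.
  by rewrite pmulr_rgt0.
pose L := Num.max (Num.max s L0) (1 + \sum_i \sum_j B i j).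
have sL : s <= L by rewrite /L !le_max lexx.
have L0' : 0 < L by apply: lt_le_trans sL.
have pL : 0 < p.[L] by apply: ppos.
have YL : forall i, 0 < (Yp i).[L].
  apply: posa => // i.
  apply: lt_le_trans (_ : 1 + \sum_i \sum_j B i j <= L); last by rewrite /L le_max lexx orbT.
  apply: (@le_lt_trans _ _ (\sum_i \sum_j B i j)); last by rewrite ltrDr.
  rewrite [X in _ <= X](bigD1 i) //= lerDl; apply: sumr_ge0 => k _; apply: sumr_ge0 => j _; exact: B0.
pose Q := \prod_i Yp i.
have QE : forall x, Q.[x] = \prod_i (Yp i).[x] by move=> x; rewrite /Q horner_prod.
have QL : 0 < Q.[L] by rewrite QE; apply: prodr_gt0 => i _.
have QN0 : Q != 0 by apply/negP => /eqP Q0; move: QL; rewrite Q0 horner0 ltxx.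
have common : forall c, s <= c -> c <= L -> {in `]c, L[, forall z, ~~ root Q z} ->
    forall i, 0 < (Yp i).[c].
  move=> c sc cL nr; apply: posb; first exact: lt_le_trans sc.
    exact: ppos.
  move=> i; rewrite leNgt; apply/negP => Yc.
  have [x xin rx] : {x : R | x \in `]c, L[ & root (Yp i) x}.
    by apply: poly_ivtoo => //; rewrite pmulr_llt0.
  move: (nr x xin); rewrite /root QE (bigD1 i) //= (eqP rx) mul0r eqxx //.
case: (prev_rootP Q s L) => [Q0|y0 _ Qy0 y0in nr|c _ cE nr].
- by move: QN0; rewrite Q0 eqxx.
- have y0s : s <= y0 by move: y0in; rewrite in_itv /= => /andP [/ltW].
  have y0L : y0 <= L by move: y0in; rewrite in_itv /= => /andP [_ /ltW].
  have := common y0 y0s y0L nr.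
  move=> H; move: Qy0; rewrite QE => /eqP; rewrite prodf_seq_eq0 => /hasP [i _ /= /eqP Yi0].
  by move: (H i); rewrite Yi0 ltxx.
- have cs : c = s by rewrite cE; apply/min_idPl.
  subst c.
  have H := common _ (lexx _) sL nr.
  exists (fun i => (Yp i).[s]); split => // i.
  have := hE s i; have := ppos s (lexx _).
  move=> ps E; rewrite -subr_gt0; by rewrite E.
Qed.

Lemma cmod_ge0 (l : R[i]) : 0 <= cmod l.
Proof. by rewrite /cmod sqrtr_ge0. Qed.

Lemma cmod_real (l : R) : 0 <= l -> cmod (Complex l 0) = l.
Proof. by move=> l0; rewrite /cmod /= expr0n /= addr0 sqrtr_sqr ger0_norm. Qed.

Lemma cp_map (n : nat) (A : 'M[R]_n) :
  char_poly (map_mx (fun x : R => Complex x 0) A) = map_poly (real_complex R) (char_poly A).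
Proof. by rewrite (map_char_poly (real_complex R)). Qed.

Lemma rho_has_sup (n : nat) (A : 'M[R]_n) :
  has_ubound [set r : R | exists l : R[i],
        root (char_poly (map_mx (fun x : R => Complex x 0) A)) l /\ r = cmod l].
Proof.
set cp := char_poly _.
have [rs Hrs] := closed_field_poly_normal cp.
have lc : lead_coef cp = 1 by apply/monicP; apply: char_poly_monic.
exists (\sum_(z <- rs) cmod z) => r [l [rl ->]].
move: rl; rewrite Hrs lc scale1r root_prod_XsubC => lin.
rewrite (big_rem l) //= lerDl; apply: sumr_ge0 => z _; exact: cmod_ge0.
Qed.

Lemma rho_ge (n : nat) (A : 'M[R]_n) (l : R) :
  0 <= l -> root (char_poly A) l -> l <= spectral_radius A.
Proof.
move=> l0 rl; rewrite /spectral_radius.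
have -> : l = cmod (Complex l 0) by rewrite cmod_real.
apply: sup_upper_bound; last first.
  exists (Complex l 0); split => //.
  rewrite cp_map. change (Complex l 0) with (real_complex R l).
  by rewrite fmorph_root.
split; last exact: rho_has_sup.
exists (cmod (Complex l 0)); exists (Complex l 0); split => //.
rewrite cp_map. change (Complex l 0) with (real_complex R l).
by rewrite fmorph_root.
Qed.

Lemma rho_rank1 (n : nat) (A : 'M[R]_n) (w : 'I_n -> R) :
  (forall i j, A i j = w j) -> \sum_j w j = 1 -> spectral_radius A <= 1.
Proof.
move=> Aw w1; rewrite /spectral_radius.
set S := (X in sup X).
have [S0|S0] := pselect (S !=set0)%classic; last first.
  have -> : S = set0 by apply/eqP; apply: contra_notT S0 => /set0P.
  by rewrite sup0 ler01.
apply: ge_sup => // r [l [rl ->]].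
move: rl; rewrite -eigenvalue_root_char => /eigenvalueP [v vA vN0].
have hj : forall j, l * v 0 j = (\sum_i v 0 i) * (real_complex R (w j)).
  move=> j; have := congr1 (fun M : 'M[R[i]]_(1,n) => M 0 j) vA; rewrite /= !mxE => <-.
  rewrite mulr_suml; apply: eq_bigr => i _; by rewrite !mxE Aw.
have [->|lN0] := eqVneq l 0.
  by rewrite /cmod /= expr0n /= addr0 sqrtr0 ler01.
have Sv : \sum_i v 0 i != 0.
  apply: contraNneq vN0 => S0'; apply/eqP/rowP => j; rewrite mxE.
  by apply/eqP; move: (hj j); rewrite S0' mul0r => /eqP; rewrite mulf_eq0 (negbTE lN0).
have : l * \sum_j v 0 j = \sum_j v 0 j.
  rewrite mulr_sumr (eq_bigr (fun j => (\sum_i v 0 i) * (real_complex R (w j)))); last by move=> j _; rewrite hj.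
  by rewrite -mulr_sumr -rmorph_sum w1 rmorph1 mulr1.
move=> /eqP; rewrite -subr_eq0 -{2}(mul1r (\sum_j v 0 j)) -mulrBl mulf_eq0 (negbTE Sv) orbF subr_eq0 => /eqP ->.
by rewrite (_ : 1 = Complex 1 0) // cmod_real.
Qed.

Lemma jensen (T : finType) (q c : T -> R) :
  (forall b, 0 < q b) -> \sum_b q b = 1 -> (forall b, 0 < c b) ->
  \sum_b q b * ln (c b) <= ln (\sum_b q b * c b).
Proof.
move=> q0 q1 c0.
set M := \sum_b q b * c b.
have [b0 _] : exists b0 : T, true.
  case: (pickP T) => [b0 _|T0]; first by exists b0.
  by move: q1; rewrite big_pred0 // => /eqP; rewrite eq_sym oner_eq0.
have M0 : 0 < M.
  rewrite /M (bigD1 b0) //=; apply: (lt_le_trans (mulr_gt0 (q0 b0) (c0 b0))).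
  rewrite lerDl; by apply: sumr_ge0 => b _; apply: mulr_ge0; apply: ltW.
have step : forall b, ln (c b) <= ln M + (c b / M - 1).
  move=> b.
  have e : c b = M * (1 + (c b / M - 1)) by rewrite addrC subrK mulrC divfK ?gt_eqF.
  rewrite {1}e lnM ?posrE //; last by rewrite addrC subrK divr_gt0.
  rewrite lerD2l; apply: le_ln1Dx; rewrite ltrBrDl addrN divr_gt0 //.
apply: (le_trans (ler_sum _ (fun b _ => ler_wpM2l (ltW (q0 b)) (step b)))).
rewrite (eq_bigr (fun b => q b * ln M + (q b * c b / M - q b))); last first.
  by move=> b _; rewrite mulrDr mulrBr mulr1 mulrA.
rewrite big_split /= -mulr_suml q1 mul1r sumrB -mulr_suml -/M divff ?gt_eqF // q1.
by rewrite subrr addr0.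
Qed.

Lemma sum_gt0 (T : finType) (F : T -> R) (b0 : T) :
  (forall b, 0 < F b) -> 0 < \sum_b F b.
Proof.
move=> F0; rewrite (bigD1 b0) //=; apply: (lt_le_trans (F0 b0)).
by rewrite lerDl; apply: sumr_ge0 => b _; apply: ltW.
Qed.

Lemma rho_lower_mx (n : nat) (B : 'M[R]_n) (q : 'I_n -> R) :
  (forall i j, 0 < B i j) -> (forall i, 0 < q i) -> \sum_i q i = 1 ->
  \sum_i \sum_j q i * q j * ln (B i j) - \sum_j q j * ln (q j)
    <= ln (spectral_radius B).
Proof.
move=> B0 q0 q1.
set c := _ - _.
have [[u [cu ru]] | H] := pselect (exists u, expR c <= u /\ root (char_poly B) u).
  have rg := @rho_ge _ _ u (le_trans (ltW (expR_gt0 c)) cu) ru.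
  have e0 := expR_gt0 c.
  rewrite -{1}[c]expRK ler_ln ?posrE //; first exact: le_trans rg.
  exact: lt_le_trans (le_trans cu rg).
have nr : forall u, expR c <= u -> ~~ root (char_poly B) u.
  by move=> u cu; apply/negP => ru; apply: H; exists u.
have [y [y0 hy]] := @key _ B _ (fun i j => ltW (B0 i j)) (expR_gt0 c) nr.
exfalso.
have hi : forall i, \sum_j q j * ln (B i j) + \sum_j q j * ln (y j)
    - \sum_j q j * ln (q j) - ln (y i) < c.
  move=> i.
  have J := @jensen _ q (fun j => B i j * y j / (q j * y i)) q0 q1.
  have J' : \sum_j q j * ln (B i j * y j / (q j * y i)) <
      c.
    apply: (le_lt_trans (J _)).
      by move=> j; apply: divr_gt0; apply: mulr_gt0.
    rewrite -[c in _ < c]expRK ltr_ln ?posrE ?expR_gt0 //; last first.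
      apply: (@sum_gt0 _ _ i) => j; apply: mulr_gt0 => //.
      by apply: divr_gt0; apply: mulr_gt0.
    rewrite (eq_bigr (fun j => B i j * y j / y i)); last first.
      move=> j _; rewrite invfM mulrA [q j * _]mulrC -!mulrA; congr (_ * _).
      by rewrite [q j * _]mulrA divff ?gt_eqF // mul1r.
    by rewrite -mulr_suml ltr_pdivrMr.
  rewrite (eq_bigr (fun j => q j * ln (B i j) + q j * ln (y j) - q j * ln (q j)
      - q j * ln (y i))) in J'; last first.
    move=> j _; rewrite ln_div ?posrE ?mulr_gt0 // !lnM ?posrE //; ring.
  have sy : \sum_j q j * ln (y i) = ln (y i) by rewrite -mulr_suml q1 mul1r.
  by move: J'; rewrite !sumrB !big_split /= sy.
have [i0 _] : exists i0 : 'I_n, true.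
  case: (pickP 'I_n) => [i0 _|T0]; first by exists i0.
  by move: q1; rewrite big_pred0 // => /eqP; rewrite eq_sym oner_eq0.
have := @sum_gt0 _ (fun i => q i * (c - (\sum_j q j * ln (B i j) + \sum_j q j * ln (y j)
    - \sum_j q j * ln (q j) - ln (y i)))) i0.
have -> : \sum_i q i * (c - (\sum_j q j * ln (B i j) + \sum_j q j * ln (y j)
    - \sum_j q j * ln (q j) - ln (y i))) = 0.
  rewrite (eq_bigr (fun i => q i * c - (\sum_j q i * q j * ln (B i j)
     + q i * \sum_j q j * ln (y j) - q i * \sum_j q j * ln (q j) - q i * ln (y i)))); last first.
    move=> i _.
    have -> : \sum_j q i * q j * ln (B i j) = q i * \sum_j q j * ln (B i j).
      by rewrite mulr_sumr; apply: eq_bigr => j _; rewrite mulrA.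
    ring.
  rewrite sumrB !sumrB big_split /= -!mulr_suml q1 !mul1r /c; ring.
rewrite ltxx => /(_ _)/Bool.diff_false_true; apply => i.
apply: mulr_gt0 => //; rewrite subr_gt0; exact: hi.
Qed.


Lemma sumT (T : finType) (F : T -> R) : \sum_(i < #|T|) F (enum_val i) = \sum_x F x.
Proof. by rewrite -big_enum_val. Qed.

Lemma rho_lower (T : finType) (A : T -> T -> R) (q : T -> R) :
  (forall a b, 0 < A a b) -> (forall a, 0 < q a) -> \sum_a q a = 1 ->
  \sum_a \sum_b q a * q b * ln (A a b) - \sum_b q b * ln (q b)
    <= ln (spectral_radius_of A).
Proof.
move=> A0 q0 q1.
have := @rho_lower_mx _ (mx_of A) (fun i => q (enum_val i)).
rewrite /spectral_radius_of.
have -> : \sum_i \sum_j q (enum_val i) * q (enum_val j) * ln (mx_of A i j)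
   = \sum_a \sum_b q a * q b * ln (A a b).
  rewrite -(@sumT _ (fun a => \sum_b q a * q b * ln (A a b))); apply: eq_bigr => i _.
  rewrite -(@sumT _ (fun b => q (enum_val i) * q b * ln (A (enum_val i) b))).
  apply: eq_bigr => j _.
  by rewrite /mx_of mxE.
rewrite (@sumT _ (fun b => q b * ln (q b))).
apply.
- by move=> i j; rewrite /mx_of mxE.
- by [].
- by rewrite sumT.
Qed.

Lemma rho_rank1_T (T : finType) (A : T -> T -> R) (w : T -> R) :
  (forall a b, A a b = w b) -> \sum_b w b = 1 -> spectral_radius_of A <= 1.
Proof.
move=> Aw w1; rewrite /spectral_radius_of.
apply: (@rho_rank1 _ _ (fun j => w (enum_val j))).
  by move=> i j; rewrite /mx_of mxE Aw.
by rewrite sumT.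
Qed.

Lemma sum2 (I J : finType) (F : I * J -> R) :
  \sum_(p : I * J) F p = \sum_i \sum_j F (i, j).
Proof. by rewrite pair_bigA; apply: eq_bigr => [[i j]]. Qed.
End Key.


Section Main.
Variables (R : realType) (E : finType) (pi1 pi2 : E -> R) (f : E * E -> int)
  (theta : R) (r pis : E * E -> R).
Hypotheses (hp1 : forall x, 0 < pi1 x) (hp2 : forall y, 0 < pi2 y)
  (hpis : forall z, pis z = expR (theta * (f z)%:~R) * pi1 z.1 * pi2 z.2)
  (hsum : \sum_z pis z = 1)
  (hR : forall a b, Rstar pi1 pi2 f theta r a b = pis b).

Lemma pis_pos z : 0 < pis z.
Proof. by rewrite hpis; apply: mulr_gt0; [apply: mulr_gt0; [apply: expR_gt0|]|]. Qed.

Lemma m1_pos x : 0 < marg1 pis x.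
Proof. by apply: (@sum_gt0 _ _ _ x) => y; apply: pis_pos. Qed.

Lemma m2_pos y : 0 < marg2 pis y.
Proof. by apply: (@sum_gt0 _ _ _ y) => x; apply: pis_pos. Qed.

Lemma lnpis x y : ln (pis (x, y)) = theta * (f (x, y))%:~R + ln (pi1 x) + ln (pi2 y).
Proof.
rewrite hpis /= !lnM ?posrE ?expR_gt0 ?mulr_gt0 //; last exact: expR_gt0. by rewrite (@expRK R).
Qed.

Lemma pihatE g : pihat_int pi1 pi2 f theta r pis g =
  \sum_x \sum_y \sum_x' \sum_y' pis (x, y) * pis (x', y') * g x y x' y'.
Proof.
rewrite /pihat_int /pihat; apply: eq_bigr => x _; apply: eq_bigr => y _.
apply: eq_bigr => x' _; apply: eq_bigr => y' _; by rewrite hR.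
Qed.

Lemma integE : integ pis f = \sum_x \sum_y pis (x, y) * (f (x, y))%:~R.
Proof. by rewrite /integ sum2. Qed.

Lemma sum3 (F : E * E * E -> R) :
  \sum_a F a = \sum_x \sum_y \sum_z F ((x, y), z).
Proof. by rewrite sum2 sum2. Qed.

Definition q1 (a : E * E * E) := pis (a.1.1, a.1.2) * pis (a.1.1, a.2) / marg1 pis a.1.1.

Lemma q1M1 (h : E -> E -> R) :
  \sum_a q1 a * h a.1.1 a.1.2 = \sum_x \sum_y pis (x, y) * h x y.
Proof.
rewrite sum3; apply: eq_bigr => x _; apply: eq_bigr => y _ /=.
rewrite /q1 /=.
have m0 := m1_pos x.
transitivity (pis (x, y) * h x y / marg1 pis x * \sum_z pis (x, z)).
  rewrite mulr_sumr; apply: eq_bigr => z _; rewrite /=. field; by rewrite gt_eqF.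
rewrite -/(marg1 pis x); field; by rewrite gt_eqF.
Qed.

Lemma q1M2 (h : E -> E -> R) :
  \sum_a q1 a * h a.1.1 a.2 = \sum_x \sum_z pis (x, z) * h x z.
Proof.
rewrite sum3; apply: eq_bigr => x _; rewrite exchange_big; apply: eq_bigr => z _ /=.
rewrite /q1 /=.
have m0 := m1_pos x.
transitivity (pis (x, z) * h x z / marg1 pis x * \sum_y pis (x, y)).
  rewrite mulr_sumr; apply: eq_bigr => y _; rewrite /=. field; by rewrite gt_eqF.
rewrite -/(marg1 pis x); field; by rewrite gt_eqF.
Qed.

Lemma q1M3 (h : E -> R) :
  \sum_a q1 a * h a.1.1 = \sum_x marg1 pis x * h x.
Proof.
rewrite (q1M1 (fun x _ => h x)); apply: eq_bigr => x _; by rewrite mulr_suml.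
Qed.

Lemma q1sum : \sum_a q1 a = 1.
Proof.
transitivity (\sum_a q1 a * (fun _ => 1) a.1.1).
  by apply: eq_bigr => a _; rewrite mulr1.
rewrite (q1M3 (fun _ => 1)); transitivity (\sum_x marg1 pis x); first by apply: eq_bigr => x _; rewrite mulr1.
by rewrite -hsum sum2.
Qed.

Lemma q1_pos a : 0 < q1 a.
Proof. by rewrite /q1 divr_gt0 ?mulr_gt0 ?pis_pos ?m1_pos. Qed.


Lemma Phi1_pos g a b : 0 < Phi1 pi1 pi2 g a b.
Proof.
case: a => [[x y] z]; case: b => [[x' y'] z']; rewrite /Phi1.
by rewrite !mulr_gt0 ?expR_gt0.
Qed.

Lemma avg_form (T : finType) (q : T -> R) (A : T -> T -> R) :
  \sum_a q a = 1 ->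
  \sum_a \sum_b q a * q b * ln (A a b) - \sum_b q b * ln (q b) =
  \sum_a q a * \sum_b q b * (ln (A a b) - ln (q b)).
Proof.
move=> qs.
rewrite [RHS](eq_bigr (fun a => q a * \sum_b q b * ln (A a b) - q a * \sum_b q b * ln (q b))); last first.
  move=> a _; rewrite -mulrBr -sumrB; congr (_ * _); apply: eq_bigr => b _; ring.
have e : \sum_a q a * (\sum_b q b * ln (q b)) = \sum_b q b * ln (q b).
  by rewrite -mulr_suml qs mul1r.
rewrite sumrB e; congr (_ - _).
apply: eq_bigr => a _; rewrite mulr_sumr; apply: eq_bigr => b _; ring.
Qed.

Lemma J1_upper g :
  2 * pihat_int pi1 pi2 f theta r pis g - ln (spectral_radius_of (Phi1 pi1 pi2 g))
  <= 2 * theta * integ pis f - relent (marg1 pis) pi1.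
Proof.
have L := @rho_lower R _ (Phi1 pi1 pi2 g) q1 (Phi1_pos g) q1_pos q1sum.
rewrite avg_form in L; last exact: q1sum.
set k := fun b : E * E * E => - (theta * (f (b.1.1, b.1.2))%:~R)
   - theta * (f (b.1.1, b.2))%:~R + (ln (marg1 pis b.1.1) - ln (pi1 b.1.1)).
have D : forall a b, ln (Phi1 pi1 pi2 g a b) - ln (q1 b) =
   g a.1.1 a.1.2 b.1.1 b.1.2 + g a.1.1 a.2 b.1.1 b.2 + k b.
  move=> [[x y] z] [[x' y'] z']; rewrite /Phi1 /q1 /k /=.
  have m0 := m1_pos x'.
  rewrite ln_div ?posrE ?mulr_gt0 ?pis_pos //.
  rewrite !lnM ?posrE ?mulr_gt0 ?pis_pos ?expR_gt0 // (@expRK R) !lnpis.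
  ring.
have S : \sum_a q1 a * \sum_b q1 b * (ln (Phi1 pi1 pi2 g a b) - ln (q1 b)) =
   2 * pihat_int pi1 pi2 f theta r pis g - 2 * theta * integ pis f
   + relent (marg1 pis) pi1.
  pose P1 := fun x y => \sum_x' \sum_y' pis (x', y') * g x y x' y'.
  pose Kc := \sum_b q1 b * k b.
  transitivity (\sum_a q1 a * (P1 a.1.1 a.1.2 + P1 a.1.1 a.2 + Kc)).
    apply: eq_bigr => a _; congr (_ * _).
    rewrite /P1 -(q1M1 (fun x' y' => g a.1.1 a.1.2 x' y')).
    rewrite -(q1M2 (fun x' y' => g a.1.1 a.2 x' y')) /Kc -!big_split.
    by apply: eq_bigr => b _; rewrite D /=; ring.
  rewrite (eq_bigr (fun a => q1 a * P1 a.1.1 a.1.2 + q1 a * P1 a.1.1 a.2 + q1 a * Kc));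
    last by move=> a _; ring.
  have eK : \sum_a q1 a * Kc = Kc by rewrite -mulr_suml q1sum mul1r.
  rewrite !big_split /= eK.
  rewrite (q1M1 P1) (q1M2 P1).
  have pE : \sum_x \sum_y pis (x, y) * P1 x y = pihat_int pi1 pi2 f theta r pis g.
    rewrite pihatE; apply: eq_bigr => x _; apply: eq_bigr => y _.
    rewrite /P1 mulr_sumr; apply: eq_bigr => x' _; rewrite mulr_sumr.
    by apply: eq_bigr => y' _; rewrite mulrA.
  rewrite pE.
  have KE : Kc = - (theta * integ pis f) - theta * integ pis f + relent (marg1 pis) pi1.
    rewrite /Kc /k.
    rewrite (eq_bigr (fun b => q1 b * (- theta * (f (b.1.1, b.1.2))%:~R)
       + q1 b * (- theta * (f (b.1.1, b.2))%:~R)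
       + q1 b * (ln (marg1 pis b.1.1) - ln (pi1 b.1.1)))); last by move=> b _; ring.
    rewrite !big_split /=.
    rewrite (q1M1 (fun x y => - theta * (f (x, y))%:~R)).
    rewrite (q1M2 (fun x y => - theta * (f (x, y))%:~R)).
    rewrite (q1M3 (fun x => ln (marg1 pis x) - ln (pi1 x))).
    rewrite integE /relent.
    have e1 : \sum_x \sum_y pis (x, y) * (- theta * (f (x, y))%:~R) =
       - (theta * \sum_x \sum_y pis (x, y) * (f (x, y))%:~R).
      rewrite mulr_sumr -sumrN; apply: eq_bigr => x _.
      rewrite mulr_sumr -sumrN; apply: eq_bigr => y _; ring.
    rewrite e1; congr (_ + _).
    apply: eq_bigr => x _; rewrite ln_div ?posrE ?m1_pos //.
  rewrite KE; ring.
lra.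
Qed.

Lemma pihat_const (G : E -> E -> R) :
  pihat_int pi1 pi2 f theta r pis (fun _ _ x' y' => G x' y') =
  \sum_x \sum_y pis (x, y) * G x y.
Proof.
rewrite pihatE.
transitivity (\sum_x \sum_y pis (x, y) * \sum_x' \sum_y' pis (x', y') * G x' y').
  apply: eq_bigr => x _; apply: eq_bigr => y _; rewrite mulr_sumr.
  apply: eq_bigr => x' _; rewrite mulr_sumr; apply: eq_bigr => y' _; by rewrite mulrA.
have e : \sum_x \sum_y pis (x, y) = 1 by rewrite -sum2.
rewrite (eq_bigr (fun x => (\sum_y pis (x, y)) * \sum_x' \sum_y' pis (x', y') * G x' y'));
  last by move=> x _; rewrite mulr_suml.
by rewrite -mulr_suml e mul1r.
Qed.

Lemma sum_l (h : E -> R) : \sum_x \sum_y pis (x, y) * h x = \sum_x marg1 pis x * h x.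
Proof. by apply: eq_bigr => x _; rewrite mulr_suml. Qed.

Definition g01 := fun x y x' y' : E => theta * (f (x', y'))%:~R
              - ln (marg1 pis x' / pi1 x') / 2.

Lemma J1_attain :
  let g0 := g01 in
  2 * theta * integ pis f - relent (marg1 pis) pi1 <=
  2 * pihat_int pi1 pi2 f theta r pis g0 - ln (spectral_radius_of (Phi1 pi1 pi2 g0)).
Proof.
rewrite /=; set g0 := g01.
have rk : spectral_radius_of (Phi1 pi1 pi2 g0) <= 1.
  apply: (@rho_rank1_T _ _ _ q1); last exact: q1sum.
  move=> [[x y] z] [[x' y'] z']; rewrite /Phi1 /q1 /g0 /g01 /=.
  have m0 := m1_pos x'.
  have p0 := hp1 x'.
  have el : expR (- ln (marg1 pis x' / pi1 x')) = pi1 x' / marg1 pis x'.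
    by rewrite expRN lnK ?posrE ?divr_gt0 // invf_div.
  rewrite (_ : _ - _ + _ = theta * (f (x', y'))%:~R + theta * (f (x', z'))%:~R
     + - ln (marg1 pis x' / pi1 x')); last by field.
  rewrite !expRD el !hpis /=; field; by rewrite !gt_eqF.
have lnr := ln_le0 rk.
have pe : pihat_int pi1 pi2 f theta r pis g0 =
    theta * integ pis f - relent (marg1 pis) pi1 / 2.
  rewrite /g0 /g01 (pihat_const (fun x' y' => theta * (f (x', y'))%:~R
              - ln (marg1 pis x' / pi1 x') / 2)).
  rewrite (eq_bigr (fun x => \sum_y (pis (x, y) * (theta * (f (x, y))%:~R))
      - \sum_y pis (x, y) * (ln (marg1 pis x / pi1 x) / 2))); last first.
    by move=> x _; rewrite -sumrB; apply: eq_bigr => y _; ring.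
  rewrite sumrB sum_l integE /relent mulr_sumr mulr_suml; congr (_ - _).
    apply: eq_bigr => x _; rewrite mulr_sumr; apply: eq_bigr => y _; ring.
  by apply: eq_bigr => x _; ring.
lra.
Qed.

Definition q2 (a : E * E * E) := pis (a.1.1, a.2) * pis (a.1.2, a.2) / marg2 pis a.2.

Lemma q2M1 (h : E -> E -> R) :
  \sum_a q2 a * h a.1.1 a.2 = \sum_x \sum_y pis (x, y) * h x y.
Proof.
rewrite sum3; apply: eq_bigr => x _; rewrite exchange_big; apply: eq_bigr => y _ /=.
rewrite /q2 /=.
have m0 := m2_pos y.
transitivity (pis (x, y) * h x y / marg2 pis y * \sum_w pis (w, y)).
  rewrite mulr_sumr; apply: eq_bigr => w _; rewrite /=. field; by rewrite gt_eqF.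
rewrite -/(marg2 pis y); field; by rewrite gt_eqF.
Qed.

Lemma q2M2 (h : E -> E -> R) :
  \sum_a q2 a * h a.1.2 a.2 = \sum_w \sum_y pis (w, y) * h w y.
Proof.
rewrite sum3 exchange_big; apply: eq_bigr => w _; rewrite exchange_big; apply: eq_bigr => y _ /=.
rewrite /q2 /=.
have m0 := m2_pos y.
transitivity (pis (w, y) * h w y / marg2 pis y * \sum_x pis (x, y)).
  rewrite mulr_sumr; apply: eq_bigr => x _; rewrite /=. field; by rewrite gt_eqF.
rewrite -/(marg2 pis y); field; by rewrite gt_eqF.
Qed.

Lemma sum_l2 (h : E -> R) : \sum_x \sum_y pis (x, y) * h y = \sum_y marg2 pis y * h y.
Proof. by rewrite exchange_big; apply: eq_bigr => y _; rewrite mulr_suml. Qed.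

Lemma q2M3 (h : E -> R) :
  \sum_a q2 a * h a.2 = \sum_y marg2 pis y * h y.
Proof. by rewrite (q2M1 (fun _ y => h y)) sum_l2. Qed.

Lemma q2sum : \sum_a q2 a = 1.
Proof.
transitivity (\sum_a q2 a * (fun _ => 1) a.2).
  by apply: eq_bigr => a _; rewrite mulr1.
rewrite (q2M3 (fun _ => 1)); transitivity (\sum_y marg2 pis y); first by apply: eq_bigr => x _; rewrite mulr1.
by rewrite -hsum sum2 exchange_big.
Qed.

Lemma q2_pos a : 0 < q2 a.
Proof. by rewrite /q2 divr_gt0 ?mulr_gt0 ?pis_pos ?m2_pos. Qed.

Lemma Phi2_pos g a b : 0 < Phi2 pi1 pi2 g a b.
Proof.
case: a => [[x y] z]; case: b => [[x' y'] z']; rewrite /Phi2.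
by rewrite !mulr_gt0 ?expR_gt0.
Qed.

Lemma J2_upper g :
  2 * pihat_int pi1 pi2 f theta r pis g - ln (spectral_radius_of (Phi2 pi1 pi2 g))
  <= 2 * theta * integ pis f - relent (marg2 pis) pi2.
Proof.
have L := @rho_lower R _ (Phi2 pi1 pi2 g) q2 (Phi2_pos g) q2_pos q2sum.
rewrite avg_form in L; last exact: q2sum.
set k := fun b : E * E * E => - (theta * (f (b.1.1, b.2))%:~R)
   - theta * (f (b.1.2, b.2))%:~R + (ln (marg2 pis b.2) - ln (pi2 b.2)).
have D : forall a b, ln (Phi2 pi1 pi2 g a b) - ln (q2 b) =
   g a.1.1 a.2 b.1.1 b.2 + g a.1.2 a.2 b.1.2 b.2 + k b.
  move=> [[x w] y] [[x' w'] y']; rewrite /Phi2 /q2 /k /=.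
  have m0 := m2_pos y'.
  rewrite ln_div ?posrE ?mulr_gt0 ?pis_pos //.
  rewrite !lnM ?posrE ?mulr_gt0 ?pis_pos ?expR_gt0 // (@expRK R) !lnpis.
  ring.
have S : \sum_a q2 a * \sum_b q2 b * (ln (Phi2 pi1 pi2 g a b) - ln (q2 b)) =
   2 * pihat_int pi1 pi2 f theta r pis g - 2 * theta * integ pis f
   + relent (marg2 pis) pi2.
  pose P1 := fun x y => \sum_x' \sum_y' pis (x', y') * g x y x' y'.
  pose Kc := \sum_b q2 b * k b.
  transitivity (\sum_a q2 a * (P1 a.1.1 a.2 + P1 a.1.2 a.2 + Kc)).
    apply: eq_bigr => a _; congr (_ * _).
    rewrite /P1 -(q2M1 (fun x' y' => g a.1.1 a.2 x' y')).
    rewrite -(q2M2 (fun x' y' => g a.1.2 a.2 x' y')) /Kc -!big_split.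
    by apply: eq_bigr => b _; rewrite D /=; ring.
  rewrite (eq_bigr (fun a => q2 a * P1 a.1.1 a.2 + q2 a * P1 a.1.2 a.2 + q2 a * Kc));
    last by move=> a _; ring.
  have eK : \sum_a q2 a * Kc = Kc by rewrite -mulr_suml q2sum mul1r.
  rewrite !big_split /= eK.
  rewrite (q2M1 P1) (q2M2 P1).
  have pE : \sum_x \sum_y pis (x, y) * P1 x y = pihat_int pi1 pi2 f theta r pis g.
    rewrite pihatE; apply: eq_bigr => x _; apply: eq_bigr => y _.
    rewrite /P1 mulr_sumr; apply: eq_bigr => x' _; rewrite mulr_sumr.
    by apply: eq_bigr => y' _; rewrite mulrA.
  rewrite pE.
  have KE : Kc = - (theta * integ pis f) - theta * integ pis f + relent (marg2 pis) pi2.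
    rewrite /Kc /k.
    rewrite (eq_bigr (fun b => q2 b * (- theta * (f (b.1.1, b.2))%:~R)
       + q2 b * (- theta * (f (b.1.2, b.2))%:~R)
       + q2 b * (ln (marg2 pis b.2) - ln (pi2 b.2)))); last by move=> b _; ring.
    rewrite !big_split /=.
    rewrite (q2M1 (fun x y => - theta * (f (x, y))%:~R)).
    rewrite (q2M2 (fun x y => - theta * (f (x, y))%:~R)).
    rewrite (q2M3 (fun y => ln (marg2 pis y) - ln (pi2 y))).
    rewrite integE /relent.
    have e1 : \sum_x \sum_y pis (x, y) * (- theta * (f (x, y))%:~R) =
       - (theta * \sum_x \sum_y pis (x, y) * (f (x, y))%:~R).
      rewrite mulr_sumr -sumrN; apply: eq_bigr => x _.
      rewrite mulr_sumr -sumrN; apply: eq_bigr => y _; ring.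
    rewrite e1; congr (_ + _).
    apply: eq_bigr => x _; rewrite ln_div ?posrE ?m2_pos //.
  rewrite KE; ring.
lra.
Qed.

Definition g02 := fun x y x' y' : E => theta * (f (x', y'))%:~R
              - ln (marg2 pis y' / pi2 y') / 2.

Lemma J2_attain :
  2 * theta * integ pis f - relent (marg2 pis) pi2 <=
  2 * pihat_int pi1 pi2 f theta r pis g02 - ln (spectral_radius_of (Phi2 pi1 pi2 g02)).
Proof.
have rk : spectral_radius_of (Phi2 pi1 pi2 g02) <= 1.
  apply: (@rho_rank1_T _ _ _ q2); last exact: q2sum.
  move=> [[x w] y] [[x' w'] y']; rewrite /Phi2 /q2 /g02 /=.
  have m0 := m2_pos y'.
  have p0 := hp2 y'.
  have el : expR (- ln (marg2 pis y' / pi2 y')) = pi2 y' / marg2 pis y'.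
    by rewrite expRN lnK ?posrE ?divr_gt0 // invf_div.
  rewrite (_ : _ - _ + _ = theta * (f (x', y'))%:~R + theta * (f (w', y'))%:~R
     + - ln (marg2 pis y' / pi2 y')); last by field.
  rewrite !expRD el !hpis /=; field; by rewrite !gt_eqF.
have lnr := ln_le0 rk.
have pe : pihat_int pi1 pi2 f theta r pis g02 =
    theta * integ pis f - relent (marg2 pis) pi2 / 2.
  rewrite /g02 (pihat_const (fun x' y' => theta * (f (x', y'))%:~R
              - ln (marg2 pis y' / pi2 y') / 2)).
  rewrite (eq_bigr (fun x => \sum_y (pis (x, y) * (theta * (f (x, y))%:~R))
      - \sum_y pis (x, y) * (ln (marg2 pis y / pi2 y) / 2))); last first.
    by move=> x _; rewrite -sumrB; apply: eq_bigr => y _; ring.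
  rewrite sumrB sum_l2 integE /relent mulr_sumr mulr_suml; congr (_ - _).
    apply: eq_bigr => x _; rewrite mulr_sumr; apply: eq_bigr => y _; ring.
  by apply: eq_bigr => x _; ring.
lra.
Qed.

Lemma J1_val : J1 pi1 pi2 f theta r pis =
  (2 * theta * integ pis f - relent (marg1 pis) pi1)%:E.
Proof.
apply/le_anti/andP; split.
  apply: ge_ereal_sup => x [g _ <-]; rewrite lee_fin; exact: J1_upper.
apply: le_trans (ereal_sup_ubound _); last first.
  by exists g01.
by rewrite lee_fin; exact: J1_attain.
Qed.

Lemma J2_val : J2 pi1 pi2 f theta r pis =
  (2 * theta * integ pis f - relent (marg2 pis) pi2)%:E.
Proof.
apply/le_anti/andP; split.
  apply: ge_ereal_sup => x [g _ <-]; rewrite lee_fin; exact: J2_upper.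
apply: le_trans (ereal_sup_ubound _); last first.
  by exists g02.
by rewrite lee_fin; exact: J2_attain.
Qed.
End Main.


Theorem mainTheorem18 (R : realType) (E : finType)
  (pi1 pi2 : E -> R) (f : E * E -> int)
  (hpi1pos : forall x, 0 < pi1 x) (hpi1sum : \sum_(x : E) pi1 x = 1)
  (hpi2pos : forall y, 0 < pi2 y) (hpi2sum : \sum_(y : E) pi2 y = 1)
  (hneg : \sum_(z : E * E) pi1 z.1 * pi2 z.2 * (f z)%:~R < 0)
  (hpos : exists z : E * E, (0 < f z)%R)
  (theta : R) (htheta : 0 < theta)
  (hphi : spectral_radius_of (Phi pi1 pi2 f theta) = 1)
  (huniq : forall t : R, 0 < t -> spectral_radius_of (Phi pi1 pi2 f t) = 1 -> t = theta)
  (r : E * E -> R) (hrpos : forall z, 0 < r z)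
  (hreig : forall a, \sum_(b : E * E) Phi pi1 pi2 f theta a b * r b = r a)
  (pis : E * E -> R) (hpisnn : forall z, 0 <= pis z)
  (hpissum : \sum_(z : E * E) pis z = 1)
  (hpisinv : forall b, \sum_(a : E * E) pis a * Rstar pi1 pi2 f theta r a b = pis b) :
  \sum_(z : E * E) expR (theta * (f z)%:~R) * pi1 z.1 * pi2 z.2 = 1 /\
  (forall z : E * E, pis z = expR (theta * (f z)%:~R) * pi1 z.1 * pi2 z.2) /\
  J1 pi1 pi2 f theta r pis
    = (2 * theta * integ pis f - relent (marg1 pis) pi1)%:E /\
  J2 pi1 pi2 f theta r pis
    = (2 * theta * integ pis f - relent (marg2 pis) pi2)%:E /\
  ((((3 * theta * integ pis f)%:E
      < 2%:E * Order.min (J1 pi1 pi2 f theta r pis) (J2 pi1 pi2 f theta r pis))%E)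
   <-> relent pis (fun z => pi1 z.1 * pi2 z.2)
       > 2 * Num.max (relent (marg1 pis) pi1) (relent (marg2 pis) pi2)).
Proof.
have [z0 _] := hpos.
pose w := fun z : E * E => expR (theta * (f z)%:~R) * pi1 z.1 * pi2 z.2.
have wpos : forall z, 0 < w z.
  by move=> z; rewrite /w !mulr_gt0 ?expR_gt0.
have hr : forall a, r a = \sum_b w b * r b by move=> a; rewrite -hreig.
have rc : forall a, r a = r z0 by move=> a; rewrite hr (hr z0).
have sw : \sum_z w z = 1.
  have h := hr z0.
  rewrite (eq_bigr (fun b => w b * r z0)) in h; last by move=> b _; rewrite rc.
  rewrite -mulr_suml in h.
  have r0 := hrpos z0.
  apply: (@mulIf _ (r z0)); [by rewrite gt_eqF | by rewrite -h mul1r].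
have hRs : forall a b, Rstar pi1 pi2 f theta r a b = w b.
  move=> a b; rewrite /Rstar (rc a) (rc b) divff ?gt_eqF // mul1r //.
have hpE : forall z, pis z = w z.
  move=> b; rewrite -hpisinv (eq_bigr (fun a => pis a * w b)); last by move=> a _; rewrite hRs.
  by rewrite -mulr_suml hpissum mul1r.
have hR' : forall a b, Rstar pi1 pi2 f theta r a b = pis b.
  by move=> a b; rewrite hRs hpE.
have J1v := @J1_val R E pi1 pi2 f theta r pis hpi1pos hpi2pos hpE hpissum hR'.
have J2v := @J2_val R E pi1 pi2 f theta r pis hpi1pos hpi2pos hpE hpissum hR'.
split; first exact: sw.
split; first exact: hpE.
split; first exact: J1v.
split; first exact: J2v.
have HE : relent pis (fun z => pi1 z.1 * pi2 z.2) = theta * integ pis f.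
  rewrite /relent /integ mulr_sumr; apply: eq_bigr => z _.
  have e : w z / (pi1 z.1 * pi2 z.2) = expR (theta * (f z)%:~R).
    rewrite /w; field; by rewrite !gt_eqF.
  rewrite hpE e (@expRK R); ring.
rewrite J1v J2v -EFin_min -EFinM lte_fin HE.
set I := integ pis f.
set H1 := relent (marg1 pis) pi1.
set H2 := relent (marg2 pis) pi2.
case: (leP H1 H2) => h12; case: (leP (2 * theta * I - H1) (2 * theta * I - H2)) => hm; split => h; lra.
Qed.
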